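(* Let $\lambda$ be a partition with $n$ parts and let $\beta \in U_\lambda(n)$. If $\beta \in UGC_\lambda(n) \cap UBP_\lambda(n)$, then the terminal pair $(\lambda,\beta)$ is nonpermutable.
   Context: Fix an integer $n \geq 1$ and write $[k] = \{1,\dots,k\}$. A partition is $\lambda = (\lambda_1,\dots,\lambda_n)$ with $\lambda_1 \geq \dots \geq \lambda_n \geq 0$ integers. Let $R_\lambda \subseteq [n-1]$ be the set of $q \in [n-1]$ with $\lambda_q > \lambda_{q+1}$; write its elements $q_1 < \dots < q_r$, and set $q_0 := 0$, $q_{r+1} := n$. For $h \in [r+1]$ the $h$-th carrel is the index interval $\{q_{h-1}+1,\dots,q_h\}$. A $\lambda$-tuple is an $n$-tuple $\beta$ with entries in $[n]$, considered with this carrel structure; it is upper if $\beta_i \geq i$ for all $i$. $U_\lambda(n)$ is the set of upper $\lambda$-tuples. Critical indices: for $\beta \in U_\lambda(n)$ and $h \in [r+1]$, set $x_1 := q_h$; given $x_{u-1}$, if some index $x$ with $q_{h-1} < x < x_{u-1}$ satisfies $\beta_{x_{u-1}} - \beta_x > x_{u-1} - x$, let $x_u$ be the largest such $x$, otherwise stop. The $x_u$ are the critical indices of $\beta$ in carrel $h$; the pairs $(x_u,\beta_{x_u})$ form its critical list. For $i \in [n]$ let $x(i)$ be the smallest critical index in the carrel of $i$ with $x(i) \geq i$. The $\lambda$-platform is $\Xi_\lambda(\beta) := \xi$ with $\xi_i := \beta_{x(i)}$. The critical list is a flag critical list if for every $h \in [r]$, $\beta_{q_h} \leq \beta_k$ where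 $k$ is the smallest critical index of $\beta$ in carrel $h+1$. $UGC_\lambda(n)$ is the set of $\beta \in U_\lambda(n)$ with flag critical list; $UBP_\lambda(n)$ is the set of $\beta \in U_\lambda(n)$ with $\beta_i \leq \Xi_\lambda(\beta)_i$ for all $i$. Lattice paths: lattice points are integer pairs $(a,b)$ with $a \geq 0$, $b \geq 1$. A lattice path is a sequence of lattice points each consecutive step of which is $(a,b) \to (a+1,b)$ or $(a,b) \to (a,b+1)$. An $n$-path is $(\Lambda_1,\dots,\Lambda_n)$ with $\Lambda_m$ a lattice path starting at $(n-m,m)$. The terminals of $(\lambda,\beta)$ are $P_m := (\lambda_m + n - m, \beta_m)$, $m \in [n]$. For a permutation $\pi$ of $[n]$, $\mathcal{LD}_\lambda(\beta;\pi)$ is the set of $n$-paths with $\Lambda_m$ ending at $P_{\pi_m}$ for every $m$ and no two distinct components sharing a lattice point. The pair $(\lambda,\beta)$ is nonpermutable if $\mathcal{LD}_\lambda(\beta;\pi) = \emptyset$ for every permutation $\pi \neq (1,\dots,n)$. *)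

(* Defs.v *)
(* Conventions: lam, beta : nat -> nat are 1-indexed
   (only the values at 1..n matter). Permutations of [n] are {perm 'I_n},
   with 'I_n index i standing for i+1. *)
From mathcomp Require Import all_boot all_order.
From mathcomp Require Import all_fingroup.
Set Implicit Arguments. Unset Strict Implicit. Unset Printing Implicit Defensive.

Definition is_partition (n : nat) (lam : nat -> nat) : Prop :=
  forall i, 1 <= i -> i < n -> lam i.+1 <= lam i.

Definition inR (n : nat) (lam : nat -> nat) (q : nat) : bool :=
  (1 <= q) && (q < n) && (lam q.+1 < lam q).

Definition carrel (n : nat) (lam : nat -> nat) (a b : nat) : Prop :=
  [/\ a = 0 \/ inR n lam a, b = n \/ inR n lam b, a < b
    & forall q, a < q -> q < b -> ~~ inR n lam q].

(* beta_y - beta_x > y - x  (for x < y), written in nat without subtraction *)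
Definition crit_cond (beta : nat -> nat) (y x : nat) : bool :=
  beta x + y < beta y + x.

Inductive critical (beta : nat -> nat) (a b : nat) : nat -> Prop :=
| crit_top : critical beta a b b
| crit_step y x : critical beta a b y -> a < x -> x < y -> crit_cond beta y x ->
    (forall z, x < z -> z < y -> ~~ crit_cond beta y z) ->
    critical beta a b x.

Definition min_crit (beta : nat -> nat) (a b i x : nat) : Prop :=
  [/\ critical beta a b x, i <= x
    & forall y, critical beta a b y -> i <= y -> x <= y].

Definition upper_tuple (n : nat) (beta : nat -> nat) : Prop :=
  forall i, 1 <= i <= n -> (1 <= beta i <= n) /\ i <= beta i.

Definition flag_critical (n : nat) (lam beta : nat -> nat) : Prop :=
  forall q b k, inR n lam q -> carrel n lam q b -> min_crit beta q b q.+1 k ->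
    beta q <= beta k.

Definition below_platform (n : nat) (lam beta : nat -> nat) : Prop :=
  forall i a b x, 1 <= i <= n -> carrel n lam a b -> a < i <= b ->
    min_crit beta a b i x -> beta i <= beta x.

Definition lattice_step (p q : nat * nat) : bool :=
  (q == (p.1.+1, p.2)) || (q == (p.1, p.2.+1)).

Definition lattice_path (s : seq (nat * nat)) : bool :=
  [&& s != [::], all (fun p => 0 < p.2) s & sorted lattice_step s].

(* L : 'I_n -> paths, component i stands for Lambda_{i+1};
   membership in LD_lam(beta; pi) *)
Definition in_LD (n : nat) (lam beta : nat -> nat) (pi : {perm 'I_n})
    (L : 'I_n -> seq (nat * nat)) : Prop :=
  [/\ forall i : 'I_n, lattice_path (L i),
      forall i : 'I_n, head (0, 0) (L i) = (n - i.+1, i.+1),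
      forall i : 'I_n, last (0, 0) (L i) =
        (lam (pi i).+1 + (n - (pi i).+1), beta (pi i).+1)
    & forall i j : 'I_n, i != j -> forall p, p \in L i -> p \notin L j].

Definition nonpermutable (n : nat) (lam beta : nat -> nat) : Prop :=
  forall pi : {perm 'I_n}, pi != 1%g -> ~ exists L, in_LD lam beta pi L.

(* Main.v *)
Require Import Defs.
From mathcomp Require Import all_boot all_order all_fingroup.
From mathcomp Require Import zify.
From Stdlib Require Import Classical.
Set Implicit Arguments. Unset Strict Implicit. Unset Printing Implicit Defensive.

Lemma ex_minP (P : nat -> Prop) N : P N -> exists m, P m /\ forall y, P y -> m <= y.
Proof.
elim: N {-2}N (leqnn N) => [|N IH] M HM PM.
  exists M; split => // y _; lia.
case: (classic (exists y, y < M /\ P y)) => [[y [Hy Py]]|Hn].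
  by apply: (IH y) => //; lia.
exists M; split => // y Py; case: (ltnP y M) => // Hy; exfalso; apply: Hn; eauto.
Qed.

Lemma ex_maxP (P : nat -> Prop) m0 N : P m0 -> (forall y, P y -> y <= N) ->
  exists m, P m /\ forall y, P y -> y <= m.
Proof.
move=> P0 Hb.
have Hm0 := Hb _ P0.
have P0' : P (N - (N - m0)) by have -> : N - (N - m0) = m0 by lia.
have [m [Pm Hm]] := ex_minP (P := fun d => P (N - d)) P0'.
exists (N - m); split => // y Py.
have Hy := Hb _ Py.
have Py' : P (N - (N - y)) by have -> : N - (N - y) = y by lia.
have := Hm _ Py'; lia.
Qed.

Section Comb.
Variables (n : nat) (lam beta : nat -> nat).
Hypothesis Hpart : is_partition n lam.
Definition EE m := lam m + (n - m) + beta m.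
Definition CC m := lam m + (n - m).

Lemma carrel_le a q : carrel n lam a q -> q <= n.
Proof. by case=> _ [->|/andP[/andP[_ ?] _]] //; lia. Qed.

Lemma carrel_lam a q : carrel n lam a q -> forall m, a < m <= q -> lam m = lam q.
Proof.
move=> Hc; have Hq := carrel_le Hc; case: Hc => _ _ _ Hno.
suff S : forall d m, a < m -> m + d = q -> lam m = lam q.
  by move=> m Hm; apply: (S (q - m)); lia.
elim => [|d IH] m Ham Hmd; first by have -> : m = q by lia.
have := IH m.+1 ltac:(lia) ltac:(lia).
have := Hno m Ham ltac:(lia); rewrite /inR.
have -> : (1 <= m) && (m < n) by apply/andP; split; lia.
rewrite /= -leqNgt => H1.
have := Hpart (i := m) ltac:(lia) ltac:(lia); lia.
Qed.

Lemma carrel_from a : (a = 0 \/ inR n lam a) -> a < n -> exists q, carrel n lam a q.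
Proof.
move=> Ha Han.
have [q [[Hq1 Hq2] Hmin]] := ex_minP (P := fun q => a < q /\ (q = n \/ inR n lam q))
  (N := n) (conj Han (or_introl erefl)).
exists q; split => // r Har Hrq; apply/negP => Hr.
have := Hmin r (conj Har (or_intror Hr)); lia.
Qed.

Lemma carrel_of a : 1 <= a <= n -> exists al q, carrel n lam al q /\ al < a <= q.
Proof.
move=> Ha.
have H0 : 0 < a by lia.
have Hb : forall y, (fun al => al < a /\ (al = 0 \/ inR n lam al)) y -> y <= a.
  by move=> y [? _]; lia.
have [al [[Ha1 Ha2] Hmax]] := ex_maxP (conj H0 (or_introl erefl)) Hb.
have [q Hq] := carrel_from Ha2 ltac:(lia).
exists al, q; split => //; rewrite Ha1 /=.
case: (leqP a q) => // Hqa; exfalso.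
have Hqn : q < n by lia.
case: Hq => _ [Hqn'|Hr] Halq _; first by lia.
have := Hmax q (conj Hqa (or_intror Hr)); lia.
Qed.

Lemma crit_le al q x : critical beta al q x -> x <= q.
Proof. elim => // y z _ IH _ ? _ _; lia. Qed.

Lemma crit_gt al q x : al < q -> critical beta al q x -> al < x.
Proof. move=> H; elim => // y z _ IH ? _ _ _; lia. Qed.

Lemma crit_E al q x y : carrel n lam al q -> al < x -> x < y -> y <= q ->
  crit_cond beta y x = (EE x < EE y).
Proof.
move=> Hc Hx Hxy Hy; have Hq := carrel_le Hc.
have E1 := carrel_lam Hc (m := x) ltac:(lia); have E2 := carrel_lam Hc (m := y) ltac:(lia).
rewrite /crit_cond /EE; apply/idP/idP => H; lia.
Qed.

Lemma Kcrit al q x : carrel n lam al q -> critical beta al q x ->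
  forall m, x < m <= q -> EE x < EE m.
Proof.
move=> Hc Hcr; elim: Hcr => [|y z Hy IH Hax Hxy Hcc Hz] m Hm; first by lia.
have Hyq := crit_le Hy.
rewrite (crit_E Hc) // in Hcc.
case: (ltngtP m y) => Hmy.
- have := Hz m ltac:(lia) Hmy; rewrite (crit_E Hc) //; lia.
- have := IH m ltac:(lia); lia.
- by rewrite Hmy.
Qed.

Lemma Kmin al q a s : carrel n lam al q -> min_crit beta al q a s -> al < a ->
  forall m, a <= m < s -> EE s <= EE m.
Proof.
move=> Hc [Hs Has Hmin] Hal m Hm.
have Hsq := crit_le Hs.
rewrite leqNgt; apply/negP => Hlt.
have Hcm : crit_cond beta s m by rewrite (crit_E Hc) //; lia.
have Hm1 : al < m by lia.
have Hm2 : m < s by lia.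
have P0 : (fun x => [/\ al < x, x < s & crit_cond beta s x]) m by split.
have Pb : forall y, (fun x => [/\ al < x, x < s & crit_cond beta s x]) y -> y <= s.
  by move=> y [_ ? _]; lia.
have [X [[HX1 HX2 HX3] HXmax]] := ex_maxP P0 Pb.
have HcX : critical beta al q X.
  apply: (crit_step Hs) => // z Hz1 Hz2; apply/negP => Hz.
  have Hz0 : al < z by lia.
  have := HXmax z (And3 Hz0 Hz2 Hz); lia.
have HmX := HXmax m P0.
have := Hmin X HcX ltac:(lia); lia.
Qed.

Lemma min_crit_ex al q i : carrel n lam al q -> al < i <= q -> exists s, min_crit beta al q i s.
Proof.
move=> Hc Hi.
have Hiq : i <= q by lia.
have [s [[Hs1 Hs2] Hmin]] := ex_minP (P := fun y => critical beta al q y /\ i <= y) (N := q)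
  (conj (crit_top _ _ _) Hiq).
by exists s; split => // y Hy1 Hy2; apply: Hmin.
Qed.

Lemma comb (Hflag : flag_critical n lam beta) (Hubp : below_platform n lam beta) a k :
  1 <= a -> a < k -> k <= n ->
  (forall m, a < m <= k -> EE m < EE a /\ beta m < beta a) ->
  (forall t, k < t <= n -> (forall m, k <= m < t -> EE t <= EE m) -> CC t + (t - k) < CC k) ->
  False.
Proof.
move=> Ha1 Hak Hkn G1 G2.
have Common : forall al' q' t lo, carrel n lam al' q' -> al' < lo -> lo <= k -> a < t ->
    lo <= t <= q' -> beta a <= beta t -> (forall m, lo <= m < t -> EE t <= EE m) -> False.
  move=> al' q' t lo Hc Hlo Hlok Hat Ht Hb Hmin.
  have Hq' := carrel_le Hc.
  case: (leqP t k) => Htk.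
    have [_ H] := G1 t ltac:(lia); lia.
  have H1 : k < t <= n by lia.
  have H2 : forall m, k <= m < t -> EE t <= EE m by move=> m Hm; apply: Hmin; lia.
  have := G2 t H1 H2.
  have Hkk : al' < k <= q' by lia.
  have Htt : al' < t <= q' by lia.
  have := carrel_lam Hc Hkk; have := carrel_lam Hc Htt.
  rewrite /CC; lia.
have Han : 1 <= a <= n by lia.
have [al [q [Hc Haq]]] := carrel_of Han.
have Hq := carrel_le Hc.
have [s Hs] := min_crit_ex Hc Haq.
have Hbs := Hubp a al q s Han Hc Haq Hs.
case: (Hs) => Hcs Has _.
have Hsq := crit_le Hcs.
case: (ltngtP a s) => Hs'.
- apply: (Common al q s a Hc) => //; try lia.
  move=> m Hm; apply: (Kmin Hc Hs); lia.
- lia.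
subst s.
have Kc := Kcrit Hc Hcs.
case: (ltnP a q) => Haq'.
  have Hm1 : a < minn k q <= k by lia.
  have Hm2 : a < minn k q <= q by lia.
  have [H1 _] := G1 _ Hm1; have := Kc _ Hm2; lia.
have Hqa : q = a by lia.
subst q.
have HR : inR n lam a.
  by case: Hc => _ [Hn|Hr] _ _ //; lia.
have Han' : a < n by lia.
have [q2 Hc2] := carrel_from (or_intror HR) Han'.
have Hq2 := carrel_le Hc2.
have Haq2 : a < a.+1 <= q2 by case: Hc2 => _ _ ? _; lia.
have [k2 Hk2] := min_crit_ex Hc2 Haq2.
have Hfl := Hflag a q2 k2 HR Hc2 Hk2.
case: (Hk2) => Hck2 Hak2 _.
have := crit_le Hck2 => Hk2q.
apply: (Common a q2 k2 a.+1 Hc2) => //; try lia.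
move=> m Hm; apply: (Kmin Hc2 Hk2); lia.
Qed.

End Comb.
Section Geo.
Variables (n : nat) (lam beta : nat -> nat) (pi : {perm 'I_n})
  (L : 'I_n -> seq (nat * nat)).
Hypothesis HL : in_LD lam beta pi L.

Definition pos (i : 'I_n) u := nth (0,0) (L i) u.
Definition Cc (m : 'I_n) := lam m.+1 + (n - m.+1).
Definition Bb (m : 'I_n) := beta m.+1.
Definition ee (i : 'I_n) := (size (L i)).-1.

Lemma sz_pos i : 0 < size (L i).
Proof. case: HL => H _ _ _; move: (H i); rewrite /lattice_path; case: (L i) => //. Qed.

Lemma pos0 i : pos i 0 = (n - i.+1, i.+1).
Proof. case: HL => _ H _ _; by rewrite /pos nth0 H. Qed.

Lemma posE i : pos i (ee i) = (Cc (pi i), Bb (pi i)).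
Proof. case: HL => _ _ H _; by rewrite /pos /ee nth_last H. Qed.

Lemma pstep i u : u.+1 < size (L i) -> lattice_step (pos i u) (pos i u.+1).
Proof.
case: HL => H _ _ _; move: (H i) => /and3P [_ _ /sortedP Hs] Hu.
exact: Hs.
Qed.

Lemma lvl i u : u < size (L i) -> (pos i u).1 + (pos i u).2 = n + u.
Proof.
elim: u => [|u IH] Hu.
  rewrite pos0 /=; have := ltn_ord i; lia.
have := pstep Hu; rewrite /lattice_step => /orP [/eqP -> | /eqP ->] /=;
  have := IH (ltnW Hu); lia.
Qed.

Lemma mono i u v : u <= v -> v < size (L i) ->
  (pos i u).1 <= (pos i v).1 /\ (pos i u).2 <= (pos i v).2.
Proof.
elim: v => [|v IH] Huv Hv.
  by have -> : u = 0 by lia.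
case: (ltnP u v.+1) => Hu.
  have [IH1 IH2] := IH (ltac:(lia)) (ltnW Hv).
  have := pstep Hv; rewrite /lattice_step => /orP [/eqP -> | /eqP ->] /=; lia.
by have -> : u = v.+1 by lia.
Qed.

Lemma order (i j : 'I_n) u : i < j -> u < size (L i) -> u < size (L j) ->
  (pos j u).1 < (pos i u).1.
Proof.
move=> Hij; elim: u => [|u IH] Hi Hj.
  rewrite !pos0 /=; have := ltn_ord j; lia.
have IH' := IH (ltnW Hi) (ltnW Hj).
have Li := lvl Hi; have Lj := lvl Hj.
have Si := pstep Hi; have Sj := pstep Hj.
have : (pos j u.+1).1 <= (pos i u.+1).1.
  move: Si Sj; rewrite /lattice_step => /orP [/eqP Ei | /eqP Ei] /orP [/eqP Ej | /eqP Ej];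
   rewrite Ei Ej /=; lia.
rewrite leq_eqVlt => /orP [/eqP E|] //.
have Ep : pos j u.+1 = pos i u.+1.
  move: E Li Lj; case: (pos j u.+1) => a b; case: (pos i u.+1) => c d /= -> ? ?.
  have -> : b = d by lia. done.
case: HL => _ _ _ Hd.
have Hne : i != j by rewrite neq_ltn Hij.
have := Hd i j Hne (pos i u.+1) (mem_nth _ Hi).
by rewrite -Ep /pos mem_nth.
Qed.

Lemma lvlE i : Cc (pi i) + Bb (pi i) = n + ee i.
Proof.
have := lvl (i:=i) (u:=ee i); rewrite posE /= => -> //.
rewrite /ee; have := sz_pos i; lia.
Qed.

Lemma ee_lt i : ee i < size (L i).
Proof. rewrite /ee; have := sz_pos i; lia. Qed.

Hypothesis Hpart : is_partition n lam.

Lemma lam_mono i j : 1 <= i -> i <= j -> j <= n -> lam j <= lam i.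
Proof.
move=> Hi; elim: j => [|j IH] Hij Hj; first by lia.
case: (ltnP i j.+1) => H.
  have := Hpart (i := j) ltac:(lia) ltac:(lia); have := IH ltac:(lia) ltac:(lia); lia.
by have -> : j.+1 = i by lia.
Qed.

Lemma Cc_lt (a m : 'I_n) : a < m -> Cc m < Cc a.
Proof.
move=> H; rewrite /Cc; have := lam_mono (i := a.+1) (j := m.+1) ltac:(lia) ltac:(lia) (ltn_ord m).
have := ltn_ord m; lia.
Qed.

Lemma L1 (l k : 'I_n) : l < k -> pi k < pi l ->
  [/\ ee l < ee k, (pos k (ee l)).1 < Cc (pi l) & Bb (pi l) < Bb (pi k)].
Proof.
move=> Hlk Hp.
case: (ltnP (ee l) (ee k)) => H.
  have Ho := order Hlk (ee_lt l) (ltac:(have := ee_lt k; lia)).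
  rewrite posE /= in Ho.
  have L1 := lvl (i := k) (u := ee l) ltac:(have := ee_lt k; lia).
  have L2 := lvlE l.
  have [_ M] := mono (i := k) (u := ee l) (v := ee k) (ltnW H) (ee_lt k).
  rewrite posE /= in M.
  split => //; lia.
have Ho := order (u := ee k) Hlk (ltac:(have := ee_lt l; lia)) (ee_lt k).
rewrite posE /= in Ho.
have [M _] := mono (i := l) (u := ee k) (v := ee l) H (ee_lt l).
rewrite posE /= in M.
have := Cc_lt Hp; lia.
Qed.

Lemma squeeze (k t : 'I_n) tau : k <= t -> pi t = t -> tau = ee t ->
  (forall m : 'I_n, k <= m <= t -> tau < size (L m)) ->
  Cc t + (t - k) <= (pos k tau).1.
Proof.
move=> Hkt Ht Htau Hal.
suff S : forall d (m : 'I_n), k <= m -> m + d = t -> Cc t + d <= (pos m tau).1.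
  by apply: S => //; lia.
elim => [|d IH] m Hkm Hmd.
  have -> : m = t by apply: val_inj; rewrite /= -Hmd; lia.
  by rewrite Htau posE Ht /= addn0.
have Hm1 : m.+1 < n by have := ltn_ord t; lia.
have := IH (Ordinal Hm1) ltac:(simpl; lia) ltac:(simpl; lia).
have := order (i := m) (j := Ordinal Hm1) (u := tau) ltac:(simpl; lia)
  (Hal m ltac:(lia)) (Hal (Ordinal Hm1) ltac:(simpl; lia)).
lia.
Qed.
End Geo.

Theorem proposition7p2 (n : nat) (lam beta : nat -> nat) :
  1 <= n -> is_partition n lam -> upper_tuple n beta ->
  flag_critical n lam beta -> below_platform n lam beta ->
  nonpermutable n lam beta.
Proof.
move=> Hn Hpart Hup Hflag Hubp pi Hpi [L HL].
have Hex : exists i : 'I_n, pi i != i.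
  apply: NNPP => Hno; move/eqP: Hpi; apply; apply/permP => i; rewrite perm1.
  by apply/eqP; apply: NNPP => Hi; apply: Hno; exists i; apply/negP.
case: Hex => i0 Hi0.
have P0 : (fun m => exists o : 'I_n, nat_of_ord o = m /\ pi o != o) (nat_of_ord i0) by exists i0.
have Pb : forall y, (fun m => exists o : 'I_n, nat_of_ord o = m /\ pi o != o) y -> y <= n.
  by move=> y [o [<- _]]; exact: ltnW (ltn_ord o).
have [kv [[k0 [Hk0v Hk0]] Hmax]] := ex_maxP P0 Pb.
subst kv.
have Hfix : forall m : 'I_n, k0 < m -> pi m = m.
  move=> m Hm; apply/eqP; apply: NNPP => Hne.
  have := Hmax m (ex_intro _ m (conj erefl (introN eqP (fun e => Hne (introT eqP e))))).
  lia.
have Ha0 : pi k0 < k0.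
  case: (ltngtP (pi k0) k0) => // H.
    have := Hfix _ H => /perm_inj E; by move: Hk0; rewrite E eqxx.
  by move: Hk0; rewrite (val_inj H) eqxx.
have Hk0n := ltn_ord k0.
clear Hpi Hi0 P0 Pb Hmax Hk0 i0.
have Hpre : forall (mo l : 'I_n), pi l = mo -> pi k0 < mo -> mo <= k0 -> l < k0.
  move=> mo l Hl H1 H2.
  case: (ltngtP l k0) => // H.
    have := Hfix _ H; rewrite Hl => E.
    have := congr1 (@nat_of_ord n) E; lia.
  have E : l = k0 by apply: ord_inj.
  rewrite E in Hl; rewrite Hl in H1; lia.
have Hinv : forall mo : 'I_n, exists l, pi l = mo.
  by move=> mo; exists ((pi^-1)%g mo); rewrite permKV.
have [av Hav] : {av | nat_of_ord (pi k0) = av} by eexists.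
have Hav0 : av < k0 by rewrite -Hav.
apply: (comb Hpart Hflag Hubp (a := av.+1) (k := k0.+1)); try lia.
- move=> m Hm.
  have Hmo : m.-1 < n by lia.
  pose mo := Ordinal Hmo.
  have Hmov : nat_of_ord mo = m.-1 by [].
  clearbody mo.
  have H1 : pi k0 < mo by rewrite Hav; lia.
  have H2 : mo <= k0 by lia.
  have [l Hpl] := Hinv mo.
  have Hl := Hpre mo l Hpl H1 H2.
  have [] := L1 HL Hpart Hl (ltac:(rewrite Hpl; exact H1)).
  rewrite Hpl => Hee _ HB.
  have E1 := lvlE HL l; rewrite Hpl in E1.
  have E2 := lvlE HL k0.
  move: E1 E2 HB; rewrite /Cc /Bb /EE Hmov Hav.
  have -> : m.-1.+1 = m by lia.
  move=> X1 X2 X3; split; lia.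
- move=> t Ht Hmin.
  have Hto : t.-1 < n by lia.
  pose to := Ordinal Hto.
  have Htov : nat_of_ord to = t.-1 by [].
  clearbody to.
  have Hkto : k0 < to by lia.
  have Hpto := Hfix _ Hkto.
  have [lk Hplk] := Hinv k0.
  have Hlk := Hpre k0 lk Hplk Ha0 (leqnn _).
  have [] := L1 HL Hpart Hlk (ltac:(rewrite Hplk; exact Ha0)).
  rewrite Hplk => Hee Hx _.
  have E1 := lvlE HL (lk); rewrite Hplk in E1.
  have E2 := lvlE HL to; rewrite Hpto in E2.
  have Hk1 := Hmin k0.+1 ltac:(lia).
  have Htk : ee L to <= ee L (lk).
    move: Hk1 E1 E2; rewrite /EE /Cc /Bb Htov.
    have -> : t.-1.+1 = t by lia.
    lia.
  have Hal : forall m : 'I_n, k0 <= m <= to -> ee L to < size (L m).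
    move=> m Hm.
    case: (ltnP k0 m) => Hkm; last first.
      have Emk : m = k0 by apply: ord_inj; lia.
      rewrite Emk; have := ee_lt HL k0; lia.
    case: (ltnP m to) => Hmt; last first.
      have -> : m = to by apply: ord_inj; lia.
      exact: ee_lt HL to.
    have Hpm := Hfix _ Hkm.
    have E3 := lvlE HL m; rewrite Hpm in E3.
    have := Hmin m.+1 ltac:(simpl in Hmt; lia).
    move: E3 E2 (ee_lt HL m); rewrite /EE /Cc /Bb Htov.
    have -> : t.-1.+1 = t by lia.
    lia.
  have Sq := squeeze HL (k := k0) (t := to) (tau := ee L to) (ltnW Hkto) Hpto erefl Hal.
  have [M _] := mono HL (i := k0) (u := ee L to) (v := ee L (lk)) Htk
    ltac:(have := ee_lt HL k0; lia).
  move: Sq M Hx; rewrite /Cc /CC Htov.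
  have -> : t.-1.+1 = t by lia.
  lia.
Qed.
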